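(* Let $\varepsilon>0$ and let $H,K\colon(-\varepsilon;\varepsilon)\to\mathbb{R}$ be real analytic functions with $K(0)<0$. Then $4H(t)^2=-t^2K(t)$ for all $|t|<\varepsilon$ if and only if $H(0)=0$ and $$H^{(m)}=\pm\frac{-mK^{(m-1)}-\frac{4}{m+1}\sum_{r=2}^{m-1}\binom{m+1}{r}H^{(r)}H^{(m-r+1)}}{2^{2-\delta_{m1}}\sqrt{-K^{(0)}}}\qquad\text{for each }m=1,2,\dots,$$ where $H^{(i)}$ and $K^{(i)}$ denote the $i$-th derivatives at $t=0$ and the same choice of sign $\pm$ is used for all $m$.
   Context: $\delta_{mn}=1$ if $m=n$ and $0$ otherwise. An empty sum equals $0$. *)

(* Defs.v *)
From Stdlib Require Import Reals List.
From Coquelicot Require Import Coquelicot.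
Open Scope R_scope.

Definition analytic_on (eps : R) (f : R -> R) : Prop :=
  forall x0, Rabs x0 < eps ->
    exists (a : nat -> R) (r : R), 0 < r /\
      forall x, Rabs (x - x0) < r -> is_pseries a (x - x0) (f x).

Definition delta (m n : nat) : nat := if Nat.eqb m n then 1%nat else 0%nat.

(* sum_{r=a}^{b} F r ; empty (= 0) when b < a *)
Definition sum_from_to (a b : nat) (F : nat -> R) : R :=
  fold_right (fun r acc => F r + acc) 0 (List.seq a (S b - a)).

(* Main.v *)
Require Import Defs.
From Stdlib Require Import Reals List.
From Coquelicot Require Import Coquelicot.
From Stdlib Require Import Lra Lia Factorial Classical FunctionalExtensionality.
Open Scope R_scope.

Definition An (f : R -> R) (x0 : R) : Prop :=
  exists (a : nat -> R) (r : R), 0 < r /\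
    forall x, Rabs (x - x0) < r -> is_pseries a (x - x0) (f x).

Lemma rad0 (a : nat -> R) (r : R) :
  (forall y, Rabs y < r -> ex_pseries a y) ->
  forall y, Rabs y < r -> Rbar_lt (Rabs y) (CV_radius a).
Proof.
  intros Hc x Hx.
  set (y := (Rabs x + r) / 2).
  assert (Hy0 : 0 <= Rabs x) by apply Rabs_pos.
  assert (Hyr : Rabs y < r).
  { unfold y. rewrite Rabs_pos_eq; lra. }
  destruct (Hc y Hyr) as [l Hl].
  assert (Hlim : is_lim_seq (fun k => scal (pow_n y k) (a k)) 0).
  { apply ex_series_lim_0. exists l. exact Hl. }
  destruct (filterlim_bounded (fun k => scal (pow_n y k) (a k))) as [M HM].
  { exists 0. exact Hlim. }
  assert (Hub : Rbar_le y (CV_radius a)).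
  { destruct (CV_radius_bounded a) as [Hu _]. apply Hu.
    exists M. intros n. specialize (HM n).
    unfold norm in HM; simpl in HM. unfold abs in HM; simpl in HM.
    rewrite pow_n_pow in HM. unfold scal in HM; simpl in HM. unfold mult in HM; simpl in HM.
    rewrite Rmult_comm. exact HM. }
  destruct (CV_radius a) as [c| |]; simpl in *; unfold y in Hub; lra.
Qed.

Lemma rad (f : R -> R) (a : nat -> R) (x0 r : R) :
  (forall x, Rabs (x - x0) < r -> is_pseries a (x - x0) (f x)) ->
  forall y, Rabs y < r -> Rbar_lt (Rabs y) (CV_radius a).
Proof.
  intros H. apply rad0. intros y Hy. exists (f (y + x0)).
  assert (Hi := H (y + x0)). replace (y + x0 - x0) with y in Hi by ring.
  apply Hi. exact Hy.
Qed.

Lemma An_mult f g x0 : An f x0 -> An g x0 -> An (fun x => f x * g x) x0.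
Proof.
  intros [a [r1 [Hr1 Ha]]] [b [r2 [Hr2 Hb]]].
  exists (PS_mult a b), (Rmin r1 r2). split. { apply Rmin_pos; auto. }
  intros x Hx. pose proof (Rmin_l r1 r2). pose proof (Rmin_r r1 r2).
  apply is_pseries_mult.
  - apply Ha; lra.
  - apply Hb; lra.
  - apply (rad f a x0 r1 Ha); lra.
  - apply (rad g b x0 r2 Hb); lra.
Qed.

Lemma An_plus f g x0 : An f x0 -> An g x0 -> An (fun x => f x + g x) x0.
Proof.
  intros [a [r1 [Hr1 Ha]]] [b [r2 [Hr2 Hb]]].
  exists (PS_plus a b), (Rmin r1 r2). split. { apply Rmin_pos; auto. }
  intros x Hx. pose proof (Rmin_l r1 r2). pose proof (Rmin_r r1 r2).
  apply (is_pseries_plus a b (x - x0) (f x) (g x)).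
  - apply Ha; lra.
  - apply Hb; lra.
Qed.

Lemma An_scal (c : R) f x0 : An f x0 -> An (fun x => c * f x) x0.
Proof.
  intros [a [r1 [Hr1 Ha]]].
  exists (PS_scal c a), r1. split; auto.
  intros x Hx. apply (is_pseries_scal c a (x - x0) (f x)).
  - unfold mult; simpl. ring.
  - apply Ha; auto.
Qed.

Lemma An_shift f x0 : An f x0 -> An (fun x => (x - x0) * f x) x0.
Proof.
  intros [a [r1 [Hr1 Ha]]].
  exists (PS_incr_1 a), r1. split; auto.
  intros x Hx. apply (is_pseries_incr_1 a (x - x0) (f x)). apply Ha; auto.
Qed.

Lemma An_ext f g x0 : (forall x, f x = g x) -> An f x0 -> An g x0.
Proof.
  intros E [a [r1 [Hr1 Ha]]]. exists a, r1. split; auto.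
  intros x Hx. rewrite <- E. auto.
Qed.

Lemma powA (y : R) (n : nat) : @pow_n (AbsRing.Ring R_AbsRing) y n = y ^ n.
Proof. induction n; simpl; [reflexivity|]. rewrite IHn. reflexivity. Qed.

Lemma An_refl f x0 : An f (- x0) -> An (fun x => f (- x)) x0.
Proof.
  intros [a [r1 [Hr1 Ha]]].
  exists (fun n => (-1) ^ n * a n), r1. split; auto.
  intros x Hx.
  assert (H1 : Rabs (- x - - x0) < r1).
  { replace (- x - - x0) with (- (x - x0)) by ring. rewrite Rabs_Ropp. auto. }
  specialize (Ha _ H1). unfold is_pseries in *.
  eapply is_series_ext; [|exact Ha].
  intros n. simpl. rewrite !pow_n_pow. unfold scal; simpl. unfold mult; simpl.
  transitivity ((x - x0) ^ n * ((-1) ^ n * a n)); [| f_equal; symmetry; apply powA].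
  replace (- x - - x0) with ((-1) * (x - x0)) by ring.
  rewrite Rpow_mult_distr.
  ring.
Qed.

Lemma cont_zero (g : R -> R) (m : R) : 0 < m -> continuity_pt g 0 ->
  (forall y, - m < y < 0 -> g y = 0) -> g 0 = 0.
Proof.
  intros Hm Hc Hz. destruct (Req_dec (g 0) 0) as [E|E]; auto.
  exfalso.
  unfold continuity_pt, continue_in, limit1_in, limit_in in Hc.
  destruct (Hc (Rabs (g 0))) as [alp [Ha Hp]]. { apply Rabs_pos_lt; auto. }
  set (y := - Rmin alp m / 2).
  assert (Hmin : 0 < Rmin alp m) by (apply Rmin_pos; lra).
  pose proof (Rmin_l alp m). pose proof (Rmin_r alp m).
  assert (Hy : - m < y < 0) by (unfold y; lra).
  specialize (Hp y). simpl in Hp. unfold R_dist in Hp.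
  rewrite (Hz y Hy) in Hp.
  assert (HH : Rabs (0 - g 0) < Rabs (g 0)).
  { apply Hp. split. { unfold D_x, no_cond. split; auto. unfold y; lra. }
    rewrite Rminus_0_r. rewrite Rabs_left; unfold y; lra. }
  rewrite Rminus_0_l, Rabs_Ropp in HH. lra.
Qed.

Lemma vanish (F : R -> R) (x0 d : R) : An F x0 -> 0 < d ->
  (forall x, x0 - d < x < x0 -> F x = 0) ->
  exists rho, 0 < rho /\ forall x, Rabs (x - x0) < rho -> F x = 0.
Proof.
  intros [a [r [Hr Ha]]] Hd Hz.
  pose proof (rad F a x0 r Ha) as Hrad.
  assert (Heq : forall x, Rabs (x - x0) < r -> F x = PSeries a (x - x0)).
  { intros x Hx. symmetry. apply is_pseries_unique. auto. }
  pose proof (Rmin_l d r). pose proof (Rmin_r d r).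
  assert (Hm : 0 < Rmin d r) by (apply Rmin_pos; lra).
  set (m := Rmin d r) in *.
  assert (Hcoef : forall n, a n = 0).
  { intros n.
    set (g := PSeries (PS_derive_n n a)).
    assert (Hg : g 0 = 0).
    { apply (cont_zero g m Hm).
      - apply PSeries_continuity. rewrite CV_radius_derive_n. apply Hrad.
        rewrite Rabs_R0; lra.
      - intros y Hy. unfold g. rewrite <- Derive_n_PSeries.
        2:{ apply Hrad. rewrite Rabs_left; lra. }
        rewrite (Derive_n_ext_loc _ (fun _ => 0)).
        + destruct n; [reflexivity|]. apply Derive_n_const.
        + apply (locally_interval _ y (-m) 0); simpl; try lra.
          intros z Hz1 Hz2.
          assert (E := Heq (z + x0)). replace (z + x0 - x0) with z in E by ring.
          rewrite <- E. { apply Hz. lra. }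
          replace (z + x0 - x0) with z by ring. rewrite Rabs_left; lra. }
    unfold g in Hg. rewrite <- Derive_n_PSeries in Hg.
    2:{ apply Hrad. rewrite Rabs_R0; lra. }
    rewrite Derive_n_coef in Hg.
    2:{ pose proof (Hrad 0) as Hq. rewrite Rabs_R0 in Hq. apply Hq. lra. }
    apply Rmult_integral in Hg. destruct Hg as [Hg|Hg]; auto.
    exfalso. exact (INR_fact_neq_0 n Hg). }
  exists r. split; auto. intros x Hx. rewrite Heq; auto.
  rewrite (PSeries_ext a (fun _ => 0)); auto. apply PSeries_const_0.
Qed.

Lemma zero_right (F : R -> R) (eps : R) : 0 < eps ->
  (forall x, Rabs x < eps -> An F x) ->
  (exists r, 0 < r /\ forall x, Rabs x < r -> F x = 0) ->
  forall x, 0 <= x < eps -> F x = 0.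
Proof.
  intros He HA [r [Hr Hz]].
  set (E := fun t => 0 <= t < eps /\ forall s, 0 <= s <= t -> F s = 0).
  set (r' := Rmin r eps / 2).
  assert (Hr' : 0 < Rmin r eps) by (apply Rmin_pos; lra).
  pose proof (Rmin_l r eps). pose proof (Rmin_r r eps).
  assert (Er' : E r').
  { unfold E, r'. split; [lra|]. intros s Hs. apply Hz. rewrite Rabs_pos_eq; lra. }
  destruct (completeness E) as [T [HTu HTl]].
  { exists eps. intros t [Ht _]. lra. }
  { exists r'. exact Er'. }
  assert (Hbig : forall s, 0 <= s < T -> F s = 0).
  { intros s Hs. destruct (classic (exists t, E t /\ s < t)) as [[t [[_ Ht] Hst]]|Hn].
    - apply Ht. lra.
    - exfalso. assert (T <= s). { apply HTl. intros t Et. apply Rnot_lt_le. intros C. apply Hn. exists t. auto. }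
      lra. }
  assert (HT : eps <= T).
  { apply Rnot_lt_le. intros C.
    assert (HT0 : r' <= T) by (apply HTu; exact Er').
    assert (HTr : 0 < r') by (unfold r'; lra).
    destruct (vanish F T T) as [rho [Hrho Hv]].
    { apply HA. rewrite Rabs_pos_eq; lra. }
    { lra. }
    { intros x Hx. apply Hbig. lra. }
    set (t' := Rmin (T + rho / 2) ((T + eps) / 2)).
    pose proof (Rmin_l (T + rho / 2) ((T + eps) / 2)).
    pose proof (Rmin_r (T + rho / 2) ((T + eps) / 2)).
    assert (Ht' : T < t').
    { unfold t'. apply Rmin_glb_lt; lra. }
    assert (Et' : E t').
    { split; [unfold t' in *; lra|]. intros s Hs.
      destruct (Rlt_le_dec s T). { apply Hbig; lra. }
      apply Hv. rewrite Rabs_pos_eq; unfold t' in *; lra. }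
    pose proof (HTu t' Et'). lra. }
  intros x Hx. apply Hbig. lra.
Qed.

Lemma fold_ext (F G : nat -> R) (l : list nat) :
  (forall k, In k l -> F k = G k) ->
  fold_right (fun r acc => F r + acc) 0 l = fold_right (fun r acc => G r + acc) 0 l.
Proof.
  induction l as [|x l IH]; intros E; simpl; auto.
  rewrite E by (left; auto). rewrite IH; auto. intros k Hk; apply E; right; auto.
Qed.

Lemma sft_ext (a b : nat) (F G : nat -> R) :
  (forall k, (a <= k <= b)%nat -> F k = G k) -> sum_from_to a b F = sum_from_to a b G.
Proof.
  intros E. unfold sum_from_to. apply fold_ext. intros k Hk.
  apply in_seq in Hk. apply E. lia.
Qed.

Lemma fold_scal (c : R) (F : nat -> R) (l : list nat) :
  c * fold_right (fun r acc => F r + acc) 0 l = fold_right (fun r acc => c * F r + acc) 0 l.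
Proof. induction l as [|x l IH]; simpl; [ring|]. rewrite <- IH. ring. Qed.

Lemma sft_scal (c : R) (a b : nat) (F : nat -> R) :
  c * sum_from_to a b F = sum_from_to a b (fun k => c * F k).
Proof. unfold sum_from_to. apply fold_scal. Qed.

Lemma sft_cons (a b : nat) (G : nat -> R) : (a <= b)%nat ->
  sum_from_to a b G = G a + sum_from_to (S a) b G.
Proof.
  intros H. unfold sum_from_to. replace (S b - a)%nat with (S (b - a)) by lia.
  replace (S b - S a)%nat with (b - a)%nat by lia. reflexivity.
Qed.

Lemma sft_snoc (a b : nat) (G : nat -> R) : (a <= S b)%nat ->
  sum_from_to a (S b) G = sum_from_to a b G + G (S b).
Proof.
  intros H. unfold sum_from_to. replace (S (S b) - a)%nat with (S (S b - a)) by lia.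
  rewrite seq_S, fold_right_app.
  replace (a + (S b - a))%nat with (S b) by lia. cbn [fold_right].
  generalize (seq a (S b - a)). intros l. induction l; cbn [fold_right]; [ring|]. rewrite IHl. ring.
Qed.

Lemma sft_f_R0 (G : nat -> R) (n : nat) : sum_f_R0 G n = sum_from_to 0 n G.
Proof.
  induction n.
  - unfold sum_from_to. simpl. ring.
  - simpl. rewrite sft_snoc by lia. rewrite IHn. reflexivity.
Qed.

Definition cc (b : nat -> R) (n : nat) : R :=
  match n with 0%nat => 0 | 1%nat => 0 | S (S j) => - b j end.

Lemma fact_pos n : 0 < INR (fact n).
Proof. apply lt_0_INR. apply lt_O_fact. Qed.

Lemma conv (h : nat -> R) (n : nat) :
  PS_mult (fun i => h i / INR (fact i)) (fun i => h i / INR (fact i)) n * INR (fact n)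
  = sum_from_to 0 n (fun i => Binomial.C n i * h i * h (n - i)%nat).
Proof.
  unfold PS_mult. rewrite sft_f_R0. rewrite Rmult_comm, sft_scal.
  apply sft_ext. intros k Hk. unfold Binomial.C.
  pose proof (fact_pos k). pose proof (fact_pos (n - k)). field. lra.
Qed.

Lemma C_n_1 m : Binomial.C (S m) 1 = INR (S m).
Proof.
  unfold Binomial.C. replace (S m - 1)%nat with m by lia.
  change (fact (S m)) with (S m * fact m)%nat. rewrite mult_INR. simpl (fact 1).
  pose proof (fact_pos m). rewrite INR_1. field. lra.
Qed.

Lemma C_n_m m : Binomial.C (S m) m = INR (S m).
Proof.
  unfold Binomial.C. replace (S m - m)%nat with 1%nat by lia.
  change (fact (S m)) with (S m * fact m)%nat. rewrite mult_INR. simpl (fact 1).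
  pose proof (fact_pos m). rewrite INR_1. field. lra.
Qed.

Lemma split_sum (h : nat -> R) (m : nat) : (2 <= m)%nat -> h 0%nat = 0 ->
  sum_from_to 0 (m + 1) (fun i => Binomial.C (m + 1) i * h i * h (m + 1 - i)%nat)
  = 2 * INR (m + 1) * h 1%nat * h m
    + sum_from_to 2 (m - 1) (fun r => Binomial.C (m + 1) r * h r * h (m - r + 1)%nat).
Proof.
  intros Hm H0. destruct m as [|[|p]]; try lia.
  replace (S (S p) + 1)%nat with (S (S (S p))) by lia.
  replace (S (S p) - 1)%nat with (S p) by lia.
  rewrite sft_cons by lia. rewrite sft_cons by lia.
  rewrite sft_snoc by lia. rewrite sft_snoc by lia.
  replace (S (S p) - S (S p) + 1)%nat with 1%nat by lia.
  rewrite (sft_ext 2 (S p) (fun i => Binomial.C (S (S (S p))) i * h i * h (S (S (S p)) - i)%nat)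
     (fun r => Binomial.C (S (S (S p))) r * h r * h (S (S p) - r + 1)%nat)).
  2:{ intros k Hk. do 2 f_equal. lia. }
  replace (S (S (S p)) - 0)%nat with (S (S (S p))) by lia.
  replace (S (S (S p)) - S (S (S p)))%nat with 0%nat by lia.
  replace (S (S (S p)) - 1)%nat with (S (S p)) by lia.
  replace (S (S (S p)) - S (S p))%nat with 1%nat by lia.
  rewrite C_n_1, C_n_m, H0.
  replace (S (S p) + 1)%nat with (S (S (S p))) by lia. ring.
Qed.

Lemma step_real (q F M S k' h1 hm sq s : R) : 0 < F -> 0 < M -> 0 < sq ->
  (s = 1 \/ s = -1) -> h1 = s * sq / 2 ->
  q * ((M + 1) * M * F) = 2 * (M + 1) * h1 * hm + S ->
  (4 * q = - (k' / F) <-> hm = s * ((- M * k' - 4 / (M + 1) * S) / (2 ^ 2 * sq))).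
Proof.
  intros HF HM Hsq Hs Hh1 Hq.
  assert (Hq' : q = (2 * (M + 1) * h1 * hm + S) / ((M + 1) * M * F)).
  { rewrite <- Hq. field. repeat split; lra. }
  rewrite Hq'. rewrite Hh1.
  destruct Hs as [-> | ->]; split; intros E.
  - apply (Rmult_eq_reg_r (4 * sq * (M + 1))); [|nra].
    replace (1 * ((- M * k' - 4 / (M + 1) * S) / (2 ^ 2 * sq)) * (4 * sq * (M + 1)))
      with (- M * k' * (M + 1) - 4 * S) by (field; lra).
    apply (Rmult_eq_compat_r (M * F)) in E.
    replace (4 * ((2 * (M + 1) * (1 * sq / 2) * hm + S) / ((M + 1) * M * F)) * (M * F))
      with (4 * ((M + 1) * sq * hm + S) / (M + 1)) in E by (field; lra).
    replace (- (k' / F) * (M * F)) with (- k' * M) in E by (field; lra).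
    apply (Rmult_eq_compat_r (M + 1)) in E.
    replace (4 * ((M + 1) * sq * hm + S) / (M + 1) * (M + 1)) with (4 * ((M + 1) * sq * hm + S)) in E by (field; lra).
    lra.
  - rewrite E. field. repeat split; lra.
  - apply (Rmult_eq_reg_r (4 * sq * (M + 1))); [|nra].
    replace (-1 * ((- M * k' - 4 / (M + 1) * S) / (2 ^ 2 * sq)) * (4 * sq * (M + 1)))
      with (M * k' * (M + 1) + 4 * S) by (field; lra).
    apply (Rmult_eq_compat_r (M * F)) in E.
    replace (4 * ((2 * (M + 1) * (-1 * sq / 2) * hm + S) / ((M + 1) * M * F)) * (M * F))
      with (4 * (- (M + 1) * sq * hm + S) / (M + 1)) in E by (field; lra).
    replace (- (k' / F) * (M * F)) with (- k' * M) in E by (field; lra).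
    apply (Rmult_eq_compat_r (M + 1)) in E.
    replace (4 * (- (M + 1) * sq * hm + S) / (M + 1) * (M + 1)) with (4 * (- (M + 1) * sq * hm + S)) in E by (field; lra).
    lra.
  - rewrite E. field. repeat split; lra.
Qed.

Definition fa (h : nat -> R) : nat -> R := fun i => h i / INR (fact i).

Definition RR (h k : nat -> R) (s : R) (m : nat) : Prop :=
  h m = s * ((- INR m * k (m - 1)%nat
             - 4 / INR (m + 1) *
               sum_from_to 2 (m - 1)
                 (fun r => Binomial.C (m + 1) r * h r * h (m - r + 1)%nat))
            / (2 ^ (2 - delta m 1) * sqrt (- k 0%nat))).

Lemma step (h k : nat -> R) (s : R) (m : nat) : (2 <= m)%nat -> h 0%nat = 0 ->
  (s = 1 \/ s = -1) -> k 0%nat < 0 -> h 1%nat = s * sqrt (- k 0%nat) / 2 ->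
  (4 * PS_mult (fa h) (fa h) (S m) = cc (fa k) (S m) <-> RR h k s m).
Proof.
  intros Hm H0 Hs Hk Hh1. unfold RR.
  destruct m as [|[|p]]; try lia.
  replace (delta (S (S p)) 1) with 0%nat by reflexivity.
  replace (k (S (S p) - 1)%nat) with (k (S p)) by (f_equal; lia).
  change (cc (fa k) (S (S (S p)))) with (- (k (S p) / INR (fact (S p)))).
  pose proof (conv h (S (S p) + 1)) as Hc.
  rewrite (split_sum h (S (S p)) ltac:(lia) H0) in Hc.
  replace (S (S p) + 1)%nat with (S (S (S p))) in Hc at 1 2 by lia.
  change (fact (S (S (S p)))) with (S (S (S p)) * (S (S p) * fact (S p)))%nat in Hc.
  rewrite !mult_INR in Hc.
  rewrite plus_INR, INR_1 in *.
  change (PS_mult (fun i : nat => h i / INR (fact i)) (fun i : nat => h i / INR (fact i)))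
    with (PS_mult (fa h) (fa h)) in Hc.
  replace (2 - 0)%nat with 2%nat by reflexivity.
  apply step_real with (F := INR (fact (S p))) (h1 := h 1%nat).
  - apply fact_pos.
  - apply lt_0_INR; lia.
  - apply sqrt_lt_R0; lra.
  - exact Hs.
  - exact Hh1.
  - rewrite <- Hc. rewrite (S_INR (S (S p))). ring.
Qed.

Lemma R1_equiv (h k : nat -> R) (s : R) : k 0%nat < 0 ->
  (RR h k s 1 <-> h 1%nat = s * sqrt (- k 0%nat) / 2).
Proof.
  intros Hk. unfold RR.
  replace (sum_from_to 2 (1 - 1) (fun r : nat => Binomial.C (1 + 1) r * h r * h (1 - r + 1)%nat)) with 0 by reflexivity.
  replace (delta 1 1) with 1%nat by reflexivity.
  replace (k (1 - 1)%nat) with (k 0%nat) by reflexivity.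
  replace (2 - 1)%nat with 1%nat by reflexivity.
  assert (Hsq : 0 < sqrt (- k 0%nat)) by (apply sqrt_lt_R0; lra).
  assert (Hsq2 : sqrt (- k 0%nat) * sqrt (- k 0%nat) = - k 0%nat) by (apply sqrt_sqrt; lra).
  replace (s * ((- INR 1 * k 0%nat - 4 / INR (1 + 1) * 0) / (2 ^ 1 * sqrt (- k 0%nat))))
    with (s * sqrt (- k 0%nat) / 2).
  - tauto.
  - replace (- INR 1 * k 0%nat) with (sqrt (- k 0%nat) * sqrt (- k 0%nat)) by (rewrite Hsq2; simpl; ring). simpl. field. lra.
Qed.

Lemma PSm0 (h : nat -> R) : PS_mult (fa h) (fa h) 0 = h 0%nat * h 0%nat.
Proof. unfold PS_mult, fa. simpl. field. Qed.

Lemma PSm1 (h : nat -> R) : h 0%nat = 0 -> PS_mult (fa h) (fa h) 1 = 0.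
Proof. intros H0. unfold PS_mult, fa. simpl. rewrite H0. field. Qed.

Lemma PSm2 (h : nat -> R) : h 0%nat = 0 -> PS_mult (fa h) (fa h) 2 = h 1%nat * h 1%nat.
Proof. intros H0. unfold PS_mult, fa. simpl. rewrite H0. field. Qed.

Lemma alg (h k : nat -> R) : k 0%nat < 0 ->
  ((forall n, 4 * PS_mult (fa h) (fa h) n = cc (fa k) n) <->
   (h 0%nat = 0 /\ exists s : R, (s = 1 \/ s = -1) /\
      forall m : nat, (1 <= m)%nat -> RR h k s m)).
Proof.
  intros Hk.
  assert (Hsq : 0 < sqrt (- k 0%nat)) by (apply sqrt_lt_R0; lra).
  assert (Hsq2 : sqrt (- k 0%nat) * sqrt (- k 0%nat) = - k 0%nat) by (apply sqrt_sqrt; lra).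
  assert (Hcc2 : cc (fa k) 2 = - k 0%nat) by (unfold cc, fa; simpl; field).
  split.
  - intros E.
    assert (H0 : h 0%nat = 0).
    { pose proof (E 0%nat) as E0. rewrite PSm0 in E0. simpl in E0. nra. }
    split; auto.
    pose proof (E 2%nat) as E2. rewrite PSm2, Hcc2 in E2 by auto.
    assert (Hs1 : exists s, (s = 1 \/ s = -1) /\ h 1%nat = s * sqrt (- k 0%nat) / 2).
    { assert (Ea : sqrt (- k 0%nat) = Rabs (2 * h 1%nat)).
      { rewrite <- sqrt_Rsqr_abs. f_equal. unfold Rsqr. lra. }
      destruct (Rle_dec 0 (h 1%nat)).
      - exists 1. split; auto. rewrite Ea, Rabs_pos_eq by lra. field.
      - exists (-1). split; auto. rewrite Ea, Rabs_left by lra. field. }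
    destruct Hs1 as [s [Hs Hh1]]. exists s. split; auto.
    intros m Hm. destruct (Nat.eq_dec m 1) as [->|Hm1].
    + apply R1_equiv; auto.
    + apply step; auto. lia.
  - intros [H0 [s [Hs HR]]] n.
    assert (Hh1 : h 1%nat = s * sqrt (- k 0%nat) / 2).
    { apply (R1_equiv h k s Hk). apply HR. lia. }
    destruct n as [|[|[|j]]].
    + rewrite PSm0, H0. simpl. ring.
    + rewrite PSm1 by auto. simpl. ring.
    + rewrite PSm2, Hcc2 by auto. rewrite Hh1.
      replace (4 * (s * sqrt (- k 0%nat) / 2 * (s * sqrt (- k 0%nat) / 2)))
        with (s * s * (sqrt (- k 0%nat) * sqrt (- k 0%nat))) by field.
      rewrite Hsq2. destruct Hs as [-> | ->]; ring.
    + apply (step h k s (S (S j))); auto. lia. apply HR. lia.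
Qed.

Lemma ps_lhs (a : nat -> R) (x : R) : Rbar_lt (Rabs x) (CV_radius a) ->
  is_pseries (fun n => 4 * PS_mult a a n) x (4 * (PSeries a x * PSeries a x)).
Proof.
  intros Hx.
  assert (Ha : is_pseries a x (PSeries a x)).
  { apply PSeries_correct. apply CV_radius_inside. exact Hx. }
  pose proof (is_pseries_mult a a x _ _ Ha Ha Hx Hx) as Hm.
  pose proof (is_pseries_scal 4 _ x _ ltac:(unfold mult; simpl; ring) Hm) as Hs.
  eapply is_pseries_ext; [|exact Hs]. intros n. reflexivity.
Qed.

Lemma ps_rhs (b : nat -> R) (x : R) : Rbar_lt (Rabs x) (CV_radius b) ->
  is_pseries (cc b) x (- x ^ 2 * PSeries b x).
Proof.
  intros Hx.
  assert (Hb : is_pseries b x (PSeries b x)).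
  { apply PSeries_correct. apply CV_radius_inside. exact Hx. }
  pose proof (is_pseries_opp _ _ _ (is_pseries_incr_n b 2 x _ Hb)) as H.
  replace (- x ^ 2 * PSeries b x) with (opp (scal (pow_n x 2) (PSeries b x))).
  - eapply is_pseries_ext; [|exact H]. intros [|[|n]]; unfold PS_opp; simpl.
    + unfold opp, zero; simpl. ring.
    + unfold opp, zero; simpl. ring.
    + unfold opp; simpl. reflexivity.
  - rewrite pow_n_pow. unfold opp, scal; simpl. unfold mult; simpl. ring.
Qed.

Lemma local_equiv (H K : R -> R) (a b : nat -> R) (r : R) : 0 < r ->
  (forall x, Rabs x < r -> is_pseries a x (H x)) ->
  (forall x, Rabs x < r -> is_pseries b x (K x)) ->
  ((forall x, Rabs x < r -> 4 * (H x) ^ 2 = - x ^ 2 * K x) <->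
   (forall n, 4 * PS_mult a a n = cc b n)).
Proof.
  intros Hr Ha Hb.
  assert (Ra : forall y, Rabs y < r -> Rbar_lt (Rabs y) (CV_radius a)).
  { apply rad0. intros y Hy. exists (H y). apply Ha. exact Hy. }
  assert (Rb : forall y, Rabs y < r -> Rbar_lt (Rabs y) (CV_radius b)).
  { apply rad0. intros y Hy. exists (K y). apply Hb. exact Hy. }
  assert (EH : forall x, Rabs x < r -> H x = PSeries a x).
  { intros x Hx. symmetry. apply is_pseries_unique. auto. }
  assert (EK : forall x, Rabs x < r -> K x = PSeries b x).
  { intros x Hx. symmetry. apply is_pseries_unique. auto. }
  assert (EL : forall x, Rabs x < r -> PSeries (fun n => 4 * PS_mult a a n) x = 4 * (H x) ^ 2).
  { intros x Hx. rewrite (is_pseries_unique _ _ _ (ps_lhs a x (Ra x Hx))). rewrite EH by auto. ring. }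
  assert (ER : forall x, Rabs x < r -> PSeries (cc b) x = - x ^ 2 * K x).
  { intros x Hx. rewrite (is_pseries_unique _ _ _ (ps_rhs b x (Rb x Hx))). rewrite EK by auto. ring. }
  assert (H0 : Rabs 0 < r) by (rewrite Rabs_R0; lra).
  split.
  - intros E n.
    apply (PSeries_ext_recip (fun n => 4 * PS_mult a a n) (cc b) n).
    + assert (Q := rad0 (fun n => 4 * PS_mult a a n) r
        (fun y Hy => ex_intro _ _ (ps_lhs a y (Ra y Hy))) 0 H0).
      rewrite Rabs_R0 in Q. exact Q.
    + assert (Q := rad0 (cc b) r
        (fun y Hy => ex_intro _ _ (ps_rhs b y (Rb y Hy))) 0 H0).
      rewrite Rabs_R0 in Q. exact Q.
    + exists (mkposreal r Hr). intros y Hy.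
      assert (Hy' : Rabs y < r).
      { change (Rabs (y - 0) < r) in Hy. rewrite Rminus_0_r in Hy. exact Hy. }
      rewrite EL, ER by auto. auto.
  - intros E x Hx. rewrite <- EL, <- ER by auto. apply PSeries_ext. auto.
Qed.

Lemma deriv_coef (H : R -> R) (a : nat -> R) (r : R) : 0 < r ->
  (forall x, Rabs x < r -> is_pseries a x (H x)) -> a = fa (fun n => Derive_n H n 0).
Proof.
  intros Hr Ha. apply functional_extensionality. intros n. unfold fa.
  assert (Ra : forall y, Rabs y < r -> Rbar_lt (Rabs y) (CV_radius a)).
  { apply rad0. intros y Hy. exists (H y). apply Ha. exact Hy. }
  rewrite (Derive_n_ext_loc H (PSeries a)).
  - rewrite Derive_n_coef. { pose proof (fact_pos n). field. lra. }
    pose proof (Ra 0) as Q. rewrite Rabs_R0 in Q. apply Q. lra.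
  - exists (mkposreal r Hr). intros y Hy.
    change (Rabs (y - 0) < r) in Hy. rewrite Rminus_0_r in Hy.
    symmetry. apply is_pseries_unique. auto.
Qed.

Lemma at0 (f : R -> R) (eps : R) : 0 < eps -> analytic_on eps f ->
  exists a r, 0 < r /\ r <= eps /\ forall x, Rabs x < r -> is_pseries a x (f x).
Proof.
  intros He hf. destruct (hf 0) as [a [r [Hr Ha]]]. { rewrite Rabs_R0. lra. }
  exists a, (Rmin r eps). split. { apply Rmin_pos; lra. } split. { apply Rmin_r. }
  intros x Hx. pose proof (Rmin_l r eps).
  assert (Q := Ha x). rewrite Rminus_0_r in Q. apply Q. lra.
Qed.

Theorem lemma1 (eps : R) (H K : R -> R)
  (heps : 0 < eps) (hH : analytic_on eps H) (hK : analytic_on eps K)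
  (hK0 : K 0 < 0) :
  (forall t, Rabs t < eps -> 4 * (H t) ^ 2 = - t ^ 2 * K t) <->
  (H 0 = 0 /\
   exists s : R, (s = 1 \/ s = -1) /\
     forall m : nat, (1 <= m)%nat ->
       Derive_n H m 0 =
       s * ((- INR m * Derive_n K (m - 1) 0
             - 4 / INR (m + 1) *
               sum_from_to 2 (m - 1)
                 (fun r => Binomial.C (m + 1) r * Derive_n H r 0
                           * Derive_n H (m - r + 1) 0))
            / (2 ^ (2 - delta m 1) * sqrt (- Derive_n K 0 0)))).
Proof.
  destruct (at0 H eps heps hH) as [a [r1 [Hr1 [Hr1e Ha]]]].
  destruct (at0 K eps heps hK) as [b [r2 [Hr2 [Hr2e Hb]]]].
  pose proof (Rmin_l r1 r2). pose proof (Rmin_r r1 r2).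
  assert (Hr : 0 < Rmin r1 r2) by (apply Rmin_pos; lra).
  set (r := Rmin r1 r2) in *.
  assert (Ha' : forall x, Rabs x < r -> is_pseries a x (H x)) by (intros; apply Ha; lra).
  assert (Hb' : forall x, Rabs x < r -> is_pseries b x (K x)) by (intros; apply Hb; lra).
  pose proof (deriv_coef H a r Hr Ha') as Ea.
  pose proof (deriv_coef K b r Hr Hb') as Eb.
  pose proof (local_equiv H K a b r Hr Ha' Hb') as LE.
  rewrite Ea, Eb in LE.
  pose proof (alg (fun n => Derive_n H n 0) (fun n => Derive_n K n 0) hK0) as ALG.
  split.
  - intros Hid.
    destruct (proj1 ALG (proj1 LE (fun x Hx => Hid x ltac:(lra)))) as [Hh0 [s [Hs HR]]].
    split; [exact Hh0|]. exists s. split; [exact Hs|]. intros m Hm. exact (HR m Hm).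
  - intros [Hh0 [s [Hs HR]]].
    assert (Hloc := proj2 LE (proj2 ALG (conj Hh0 (ex_intro _ s (conj Hs HR))))).
    set (F := fun t => 4 * (H t) ^ 2 + t ^ 2 * K t).
    assert (AF : forall x0, Rabs x0 < eps -> An F x0).
    { intros x0 Hx0.
      assert (AH : An H x0) by exact (hH x0 Hx0).
      assert (AK : An K x0) by exact (hK x0 Hx0).
      pose proof (An_plus _ _ x0 (An_scal 4 _ x0 (An_mult _ _ x0 AH AH))
        (An_plus _ _ x0 (An_shift _ x0 (An_shift _ x0 AK))
          (An_plus _ _ x0 (An_scal (2 * x0) _ x0 (An_shift _ x0 AK)) (An_scal (x0 ^ 2) _ x0 AK)))) as Q.
      eapply An_ext; [|exact Q]. intros x. unfold F. cbv beta. ring. }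
    assert (Fz : exists r0, 0 < r0 /\ forall x, Rabs x < r0 -> F x = 0).
    { exists r. split; auto. intros x Hx. unfold F. rewrite Hloc by auto. ring. }
    assert (Fp := zero_right F eps heps AF Fz).
    assert (Fn := zero_right (fun t => F (- t)) eps heps
      (fun x0 Hx0 => An_refl F x0 (AF (- x0) ltac:(rewrite Rabs_Ropp; exact Hx0)))
      ltac:(destruct Fz as [r0 [Hr0 Hz]]; exists r0; split; [exact Hr0|];
            intros x Hx; apply Hz; rewrite Rabs_Ropp; exact Hx)).
    intros t Ht.
    assert (Ft : F t = 0).
    { destruct (Rle_dec 0 t).
      - apply Fp. split; auto. rewrite Rabs_pos_eq in Ht; lra.
      - replace t with (- - t) by ring. apply Fn. rewrite Rabs_left in Ht; lra. }
    unfold F in Ft. lra.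
Qed.
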